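(* Let $\mathcal{F}\subseteq\mathcal{P}(\omega)$ be a free filter and let $\mathcal{F}^{(\omega)}$ be the set of all subsets of $\omega\times\omega$ of the form $\bigcup\{\{n\}\times A_n:n<\omega\}$ with $A_n\in\mathcal{F}$ for all $n$. Then (a) $\mathcal{F}$ is non-meager if and only if $\mathcal{F}^{(\omega)}$ is non-meager; and (b) $\mathcal{F}$ is a $P$-filter if and only if $\mathcal{F}^{(\omega)}$ is a $P$-filter.
   Context: A filter on a countable set $S$ is free if it contains all cofinite subsets of $S$. Subsets of $\omega$ (resp. $\omega\times\omega$) are identified with their characteristic functions, so $\mathcal{P}(\omega)$ and $\mathcal{P}(\omega\times\omega)$ carry the Cantor set topology; a filter is non-meager if it is not meager as a subspace of this Cantor set. A filter $\mathcal{G}$ is a $P$-filter if for every countable $\{G_n:n<\omega\}\subseteq\mathcal{G}$ there is $G\in\mathcal{G}$ with $G\setminus G_n$ finite for every $n$. ($\mathcal{F}^{(\omega)}$ is a filter on $\omega\times\omega$.) *)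

(* Defs.v *)
From HB Require Import structures.
From mathcomp Require Import all_boot all_order all_algebra.
From mathcomp Require Import all_classical all_reals all_analysis.

Set Implicit Arguments.
Unset Strict Implicit.
Unset Printing Implicit Defensive.

Local Open Scope classical_set_scope.

(* P(omega), identified with characteristic functions: the Cantor space 2^omega *)
Definition Pomega : Type := cantor_space.
(* P(omega x omega), identified with characteristic functions: 2^(omega x omega)
   with the product topology of discrete bool *)
Definition Pomega2 : Type := prod_topology (fun _ : nat * nat => bool).
HB.instance Definition _ := Pointed.on Pomega2.
HB.instance Definition _ := Nbhs.on Pomega2.
HB.instance Definition _ := Topological.on Pomega2.

Definition nowhere_dense (X : topologicalType) (A : set X) : Prop :=
  interior (closure A) = set0.

Definition meager (X : topologicalType) (A : set X) : Prop :=
  exists N : nat -> set X,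
    (forall n, nowhere_dense (N n)) /\ A `<=` \bigcup_n N n.

(* a family of subsets of T (a filter, given as a set_system) seen as a
   subset of the Cantor space 2^T via characteristic functions *)
Definition char_set {T : Type} (F : set_system T) : set (T -> bool) :=
  [set f | F [set x | f x]].

Definition free_filter {T : Type} (F : set_system T) : Prop :=
  ProperFilter F /\ forall A : set T, finite_set (~` A) -> F A.

Definition P_filter {T : Type} (G : set_system T) : Prop :=
  forall Gs : nat -> set T, (forall n, G (Gs n)) ->
    exists H, G H /\ forall n, finite_set (H `\` Gs n).

Definition Fomega (F : set_system nat) : set_system (nat * nat) :=
  [set B | exists A : nat -> set nat, (forall n, F (A n)) /\
           B = \bigcup_n ([set n] `*` A n)].

(* Main.v *)
Require Import Defs.
From HB Require Import structures.
From mathcomp Require Import all_boot all_order all_algebra.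
From mathcomp Require Import all_classical all_reals all_analysis.
Local Open Scope classical_set_scope.
Definition cyl {I : eqType} (S : seq I) (f : I -> bool) : set (I -> bool) :=
  [set g | forall x, x \in S -> g x = f x].
Lemma cyl_nbhs (I : eqType) (f : prod_topology (fun _ : I => bool)) S :
  nbhs f (cyl S f).
Proof.
elim: S => [|x S IH].
  have : nbhs f setT by apply: filterT.
  by apply: filterS => g _ x.
have h1 : nbhs f (proj x @^-1` [set f x]).
  apply: (@proj_continuous I (fun _ => bool) x f [set f x]).
  by [].
apply: (@filterS _ _ _ ((proj x @^-1` [set f x]) `&` cyl S f)); last exact: filterI.
move=> g [/= gx gS] y.
by rewrite inE => /predU1P [->|/gS].
Qed.

Lemma nbhs_cyl (I : eqType) (f : prod_topology (fun _ : I => bool)) U :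
  nbhs f U -> exists S : seq I, cyl S f `<=` U.
Proof.
pose Z : set_system (I -> bool) := [set U : set (I -> bool) | exists S : seq I, cyl S f `<=` U].
have ZF : Filter Z.
  constructor.
  - by exists [::].
  - move=> P Q [S1 h1] [S2 h2]; exists (S1 ++ S2) => g hg; split.
      by apply: h1 => x xS; apply: hg; rewrite mem_cat xS.
    by apply: h2 => x xS; apply: hg; rewrite mem_cat xS orbT.
  - by move=> P Q PQ [S h]; exists S => g /h /PQ.
have : Z --> (f : prod_topology (fun _ : I => bool)).
  apply/cvg_sup => i A.

  move=> [_ [[W oW <-]]] /= Wf /filterS; apply.
  exists [:: i] => g hg /=. rewrite hg //. by rewrite inE.
by move/(_ U).
Qed.

Lemma nd_char (I : eqType) (N : set (prod_topology (fun _ : I => bool))) :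
  nowhere_dense N <-> forall (f : I -> bool) (S : seq I),
    exists g S', cyl S f g /\ forall h, cyl S' g h -> ~ N h.
Proof.
split.
  move=> ND f S; apply: contrapT => H.
  have : interior (closure N) f.
    rewrite /interior /=.
    apply: (@filterS _ _ _ (cyl S f)); last exact: cyl_nbhs.
    move=> g gS B /nbhs_cyl [S' S'B].
    apply: contrapT => K; apply: H; exists g, S'; split => // h hS Nh.
    by apply: K; exists h; split => //; apply: S'B.
  by rewrite ND.
move=> H; rewrite /nowhere_dense; apply/seteqP; split => [x|x] //.
rewrite /interior /= => /nbhs_cyl [S xS].
have [g [S' [gS gS']]] := H x S.
have := xS g gS (cyl S' g) (@cyl_nbhs I g S').
by case=> h [Nh hS]; case: (gS' h hS Nh).
Qed.

Lemma bound_seq (S : seq nat) : exists n, forall x, x \in S -> x < n.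
Proof.
elim: S => [|a S [n Hn]]; first by exists 0.
exists (maxn n a.+1) => x; rewrite inE => /predU1P [->|/Hn xn].
  by rewrite leq_max leqnn orbT.
by rewrite leq_max xn.
Qed.

Lemma bound_seq2 (S : seq (nat * nat)) :
  exists n, forall x, x \in S -> x.1 < n /\ x.2 < n.
Proof.
elim: S => [|a S [n Hn]]; first by exists 0.
exists (maxn n (maxn a.1 a.2).+1) => x; rewrite inE => /predU1P [->|/Hn [x1 x2]].
  by rewrite !leq_max !ltnS !leq_max !leqnn /= !orbT.
by rewrite !leq_max x1 x2.
Qed.

Definition sqL (n : nat) : seq (nat * nat) :=
  [seq (i, j) | i <- iota 0 n, j <- iota 0 n].

Lemma mem_sqL n x : (x \in sqL n) = (x.1 < n) && (x.2 < n).
Proof.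
case: x => a b /=; rewrite /sqL.
apply/allpairsP/andP => [[[i j] /= [hi hj [-> ->]]]|[ha hb]].
  by move: hi hj; rewrite !mem_iota.
by exists (a, b); rewrite /= !mem_iota.
Qed.

Lemma nd1_elim (N : set Pomega) : nowhere_dense N ->
  forall (f : nat -> bool) n, exists g m, (forall x, x < n -> g x = f x) /\
    forall h, (forall x, x < m -> h x = g x) -> ~ N h.
Proof.
move=> ND f n.
have [g [S' [gS gS']]] := (@nd_char _ N).1 ND f (iota 0 n).
have [m Hm] := bound_seq S'.
exists g, m; split.
  by move=> x xn; apply: gS; rewrite mem_iota.
by move=> h hm; apply: gS' => x /Hm /hm.
Qed.

Lemma nd1_intro (N : set Pomega) :
  (forall (f : nat -> bool) n, exists g m, (forall x, x < n -> g x = f x) /\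
    forall h, (forall x, x < m -> h x = g x) -> ~ N h) -> nowhere_dense N.
Proof.
move=> H; apply/(@nd_char _ N) => f S.
have [n Hn] := bound_seq S.
have [g [m [gf gh]]] := H f n.
exists g, (iota 0 m); split.
  by move=> x /Hn /gf.
by move=> h hS; apply: gh => x xm; apply: hS; rewrite mem_iota.
Qed.

Definition agsq (n : nat) (g f : nat * nat -> bool) :=
  forall x, x.1 < n -> x.2 < n -> g x = f x.

Lemma nd2_elim (N : set Pomega2) : nowhere_dense N ->
  forall (f : nat * nat -> bool) n, exists g m, agsq n g f /\
    forall h, agsq m h g -> ~ N h.
Proof.
move=> ND f n.
have [g [S' [gS gS']]] := (@nd_char _ N).1 ND f (sqL n).
have [m Hm] := bound_seq2 S'.
exists g, m; split.
  by move=> x x1 x2; apply: gS; rewrite mem_sqL x1 x2.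
by move=> h hm; apply: gS' => x /Hm [x1 x2]; apply: hm.
Qed.

Lemma nd2_intro (N : set Pomega2) :
  (forall (f : nat * nat -> bool) n, exists g m, agsq n g f /\
    forall h, agsq m h g -> ~ N h) -> nowhere_dense N.
Proof.
move=> H; apply/(@nd_char _ N) => f S.
have [n Hn] := bound_seq2 S.
have [g [m [gf gh]]] := H f n.
exists g, (sqL m); split.
  by move=> x /Hn [x1 x2]; apply: gf.
by move=> h hS; apply: gh => x x1 x2; apply: hS; rewrite mem_sqL x1 x2.
Qed.

Lemma unif (T : eqType) (L : seq T) (P : (T -> bool) -> nat -> Prop) :
  (forall f f' m, (forall x, x \in L -> f x = f' x) -> P f m -> P f' m) ->
  (forall f m m', m <= m' -> P f m -> P f m') ->
  (forall f, exists m, P f m) -> exists m, forall f, P f m.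
Proof.
elim: L P => [|a L IH] P Pres Pmon Pex.
  have [m Hm] := Pex (fun _ => false).
  by exists m => f; apply: Pres Hm.
pose upd (f : T -> bool) (b : bool) := fun x => if x == a then b else f x.
pose P' f m := P (upd f true) m /\ P (upd f false) m.
have [] := IH P'.
- move=> f f' m hL [h1 h2]; split.
    apply: Pres h1 => x; rewrite inE /upd; case: eqP => //= _ /hL //.
  apply: Pres h2 => x; rewrite inE /upd; case: eqP => //= _ /hL //.
- by move=> f m m' mm' [h1 h2]; split; apply: Pmon mm' _.
- move=> f; have [m1 h1] := Pex (upd f true); have [m2 h2] := Pex (upd f false).
  exists (maxn m1 m2); split.
    by apply: Pmon h1; rewrite leq_maxl.
  by apply: Pmon h2; rewrite leq_maxr.
move=> m Hm; exists m => f; have [h1 h2] := Hm f.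
case fa: (f a).
  by apply: Pres h1 => x _; rewrite /upd; case: eqP => // ->.
by apply: Pres h2 => x _; rewrite /upd; case: eqP => // ->.
Qed.

Lemma sec_bigcup (A : nat -> set nat) n :
  [set c | (\bigcup_m ([set m] `*` A m)) (n, c)] = A n.
Proof.
apply/seteqP; split => c /=.
  by case=> m _ [/= -> ].
by move=> h; exists n.
Qed.

Lemma Fomega_sec (F : set_system nat) B : Fomega F B -> forall n, F [set c | B (n, c)].
Proof. by case=> A [hA ->] n; rewrite sec_bigcup. Qed.

Lemma Fomega_intro (F : set_system nat) (B : set (nat * nat)) :
  (forall n, F [set c | B (n, c)]) -> Fomega F B.
Proof.
move=> h; exists (fun n => [set c | B (n, c)]); split => //.
apply/seteqP; split => [[a b]|[a b]] /=.
  by move=> hb; exists a.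
by case=> m _ [/= -> ].
Qed.

Lemma PF1 (F : set_system nat) : free_filter F -> P_filter F -> P_filter (Fomega F).
Proof.
case=> PF Fcof hP Gs hG.
have FF : Filter F by case: PF.
pose S k n := [set c | Gs k (n, c)].
have hS k n : F (S k n) by exact: (@Fomega_sec F _ (hG k) n).
have [Pn hPn] := choice (fun n => hP (fun k => S k n) (fun k => hS k n)).
pose fix T n j := if j is j'.+1 then T n j' `&` S j'.+1 n else Pn n `&` S 0 n.
have FT n j : F (T n j).
  elim: j => [|j IH] /=; apply: (@filterI _ _ FF) => //; by case: (hPn n).
have TP n j : T n j `<=` Pn n.
  by elim: j => [|j IH] /= c [] // /IH.
have TS n j k : k <= j -> T n j `<=` S k n.
  elim: j => [|j IH] /=.
    by rewrite leqn0 => /eqP -> c [].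
  rewrite leq_eqVlt => /predU1P [-> c []//|]; rewrite ltnS => /IH h c [/h] //.
exists [set x | T x.1 x.1 x.2]; split.
  by apply: (@Fomega_intro F) => n /=; apply: FT.
move=> k.
apply: (@sub_finite_set _ _ (\bigcup_(n in `I_k) ([set n] `*` (Pn n `\` S k n)))).
  move=> [a b] /= [hT hG']; exists a => /=.
    rewrite /= ltnNge; apply/negP => ka.
    by apply: hG'; apply: (TS a a k ka).
  split => //; split; first by apply: (TP a a).
  by [].
apply: bigcup_finite; first exact: finite_II.
move=> n _; apply: finite_setX; first exact: finite_set1.
by case: (hPn n) => _ ; apply.
Qed.

Lemma PF2 (F : set_system nat) : free_filter F -> P_filter (Fomega F) -> P_filter F.
Proof.
case=> PF Fcof hP As hA.
pose Gs k := [set x : nat * nat | As k x.2].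
have hG k : Fomega F (Gs k) by apply: (@Fomega_intro F (Gs k)) => n; exact: hA.
have [H [hH fin]] := hP Gs hG.
exists [set c | H (0, c)]; split; first exact: (@Fomega_sec F _ hH 0).
move=> k; apply: (@sub_finite_set _ _ (snd @` (H `\` Gs k))).
  by move=> c [h1 h2]; exists (0, c).
by apply: finite_image.
Qed.

Lemma proj_meager (F : set_system nat) : free_filter F ->
  meager (char_set F : set Pomega) -> meager (char_set (Fomega F) : set Pomega2).
Proof.
move=> _ [N [ND cov]].
exists (fun i => [set f : Pomega2 | N i (fun c => f (0, c))]); split.
  move=> i; apply: nd2_intro => f n.
  have [g1 [m [g1f hm]]] := @nd1_elim (N i) (ND i) (fun c => f (0, c)) n.
  exists (fun x => if x.1 == 0 then g1 x.2 else f x), (maxn m 1); split.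
    move=> [a b] /= an bn; case: eqP => // ->; exact: g1f.
  move=> h hh; apply: hm => c cm.
  rewrite (hh (0, c)) //=.
    by rewrite leq_max ltnS leqnn orbT.
  by rewrite leq_max cm.
move=> f hf; have := @Fomega_sec F _ hf 0.
by move=> /cov [i _ Ni]; exists i.
Qed.

Lemma agsq_mon n m g f : n <= m -> agsq m g f -> agsq n g f.
Proof. by move=> nm h x x1 x2; apply: h; apply: leq_trans nm. Qed.

Lemma talag (F : set_system nat) : free_filter F ->
  meager (char_set (Fomega F) : set Pomega2) -> meager (char_set F : set Pomega).
Proof.
case=> PF Fcof [N [ND cov]].
have FF : Filter F by case: PF.
have step1 : forall k (f : nat * nat -> bool) n, exists g m, agsq n g f /\
    forall h, agsq m h g -> forall i, i <= k -> ~ N i h.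
  elim=> [|k IH] f n.
    have [g [m [gf gh]]] := @nd2_elim (N 0) (ND 0) f n.
    exists g, m; split => // h hh i; rewrite leqn0 => /eqP ->; exact: gh.
  have [g [m [gf gh]]] := IH f n.
  have [g' [m' [g'g g'h]]] := @nd2_elim (N k.+1) (ND k.+1) g (maxn n m).
  exists g', (maxn (maxn n m) m'); split.
    move=> x x1 x2; rewrite (g'g x) ?(gf x x1 x2) //.
      by apply: leq_trans x1 (leq_maxl _ _).
    by apply: leq_trans x2 (leq_maxl _ _).
  move=> h hh i; rewrite leq_eqVlt => /predU1P [->|].
    by apply: g'h; apply: agsq_mon hh; apply: leq_maxr.
  rewrite ltnS => ik; apply: gh => // x x1 x2.
  have y1 : x.1 < maxn n m by apply: leq_trans x1 (leq_maxr _ _).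
  have y2 : x.2 < maxn n m by apply: leq_trans x2 (leq_maxr _ _).
  rewrite -(g'g x y1 y2); apply: hh.
    by apply: leq_trans y1 (leq_maxl _ _).
  by apply: leq_trans y2 (leq_maxl _ _).
have step2 : forall k n, exists m, n < m /\ forall f, exists g, agsq n g f /\
    forall h, agsq m h g -> forall i, i <= k -> ~ N i h.
  move=> k n.
  pose P f m := exists g, agsq n g f /\
     forall h, agsq m h g -> forall i, i <= k -> ~ N i h.
  have Hu : exists m, forall f, P f m.
    apply: (@unif _ (sqL n) P).
    - move=> f f' m hL [g [gf gh]]; exists g; split => // x x1 x2.
      by rewrite (gf x x1 x2); apply: hL; rewrite mem_sqL x1 x2.
    - move=> f m m' mm' [g [gf gh]]; exists g; split => // h hh.
      by apply: gh; apply: agsq_mon hh.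
    - by move=> f; have [g [m [gf gh]]] := step1 k f n; exists m, g.
  have [m Hm] := Hu.
  exists (maxn m n.+1); split; first by rewrite leq_maxr.
  move=> f; have [g [gf gh]] := Hm f; exists g; split => // h hh.
  by apply: gh; apply: agsq_mon hh; apply: leq_maxl.
have [next hnext] := choice (fun kn : nat * nat => step2 kn.1 kn.2).
pose fix nk k := if k is k'.+1 then next (k', nk k') else 0.
have nkS k : nk k < nk k.+1 by exact: (hnext (k, nk k)).1.
have nk_ge k : k <= nk k.
  by elim: k => [//|k IH]; apply: leq_ltn_trans IH (nkS k).
have nk_mono j j' : j <= j' -> nk j <= nk j'.
  elim: j' => [|j' IH]; first by rewrite leqn0 => /eqP ->.
  rewrite leq_eqVlt => /predU1P [->//|]; rewrite ltnS => /IH h.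
  exact: leq_trans h (ltnW (nkS j')).
have [G hGs] := choice (fun kf : nat * (nat * nat -> bool) =>
  (hnext (kf.1, nk kf.1)).2 kf.2).
exists (fun j => [set A : Pomega | forall k, j <= k ->
  exists x, nk k <= x < nk k.+1 /\ A x]); split.
  move=> j; apply: nd1_intro => f n.
  exists (fun x => if x < n then f x else false), (nk (maxn j n).+1); split.
    by move=> x ->.
  move=> h hh /(_ (maxn j n) (leq_maxl _ _)) [x [/andP [x1 x2] hx]].
  move: hx; rewrite hh // ifF //.
  apply/negbTE; rewrite -leqNgt; apply: leq_trans x1.
  by apply: leq_trans (nk_ge _); apply: leq_maxr.
move=> A hA; apply: contrapT => Hn.
have miss : forall j, exists k, j <= k /\
    forall x, nk k <= x < nk k.+1 -> A x = false.
  move=> j; apply: contrapT => H1; apply: Hn; exists j => // k jk.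
  apply: contrapT => H2; apply: H1; exists k; split => // x hx.
  by apply/negbTE/negP => Ax; apply: H2; exists x; split.
pose B0 := fun x : nat * nat => (x.1 <= x.2) && A x.2.
pose ms k := `[< forall x, nk k <= x < nk k.+1 -> A x = false >].
pose G' k f := fun x : nat * nat =>
  if (x.1 < nk k.+1) && (x.2 < nk k.+1) then G (k, f) x else f x.
pose fix b k := if k is k'.+1 then (if ms k' then G' k' (b k') else b k') else B0.
pose B := fun x : nat * nat => b (maxn x.1 x.2).+1 x.
have bS k : agsq (nk k) (b k.+1) (b k).
  move=> x x1 x2 /=; case: ifP => // _.
  rewrite /G' (ltn_trans x1 (nkS k)) (ltn_trans x2 (nkS k)) /=.
  exact: (hGs (k, b k)).1.
have stab j j' : j <= j' -> agsq (nk j) (b j') (b j).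
  elim: j' => [|j' IH]; first by rewrite leqn0 => /eqP ->.
  rewrite leq_eqVlt => /predU1P [->//|]; rewrite ltnS => jj x x1 x2.
  rewrite (bS j' x) ?(IH jj x x1 x2) //.
    exact: leq_trans x1 (nk_mono _ _ jj).
  exact: leq_trans x2 (nk_mono _ _ jj).
have BE k : agsq (nk k.+1) B (b k.+1).
  move=> x x1 x2; rewrite /B.
  case: (leqP (maxn x.1 x.2).+1 k.+1) => hp.
    symmetry; apply: (stab _ _ hp).
      by apply: leq_trans (nk_ge _); rewrite ltnS leq_maxl.
    by apply: leq_trans (nk_ge _); rewrite ltnS leq_maxr.
  exact: (stab _ _ (ltnW hp)).
have B0b k x : B0 x -> b k x.
  elim: k => [|k IH] /=; first by [].
  case: ifP => hm; last exact: IH.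
  rewrite /G'; case: ifP => hsq; last exact: IH.
  move=> hB0.
  case: (boolP ((x.1 < nk k) && (x.2 < nk k))) => [/andP [y1 y2]|hn].
    by rewrite (hGs (k, b k)).1 //; apply: IH.
  move/asboolP: hm => hm; move: hB0; rewrite /B0 => /andP [le12 Ax2].
  move/andP: hsq => [_ z2].
  have z : nk k <= x.2.
    rewrite leqNgt; apply/negP => z; apply: (negP hn); rewrite z andbT.
    exact: leq_ltn_trans le12 z.
  by rewrite hm ?z ?z2 in Ax2.
have BF : Fomega F [set x | B x].
  apply: (@Fomega_intro F) => r.
  apply: (@filterS _ _ FF ([set c | A c] `&` [set c | r <= c])).
    by move=> c [Ac rc] /=; apply: B0b; rewrite /B0 /= rc Ac.
  apply: (@filterI _ _ FF) => //; apply: Fcof.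
  apply: (@sub_finite_set _ _ `I_r); last exact: finite_II.
  by move=> c /= h; rewrite ltnNge; apply/negP => h'; apply: h.
have [i _ Ni] := cov _ BF.
have [k [ik hk]] := miss i.
have hGk := (hGs (k, b k)).2.
apply: (hGk B _ i ik Ni).
move=> x x1 x2; rewrite (BE k x x1 x2) /=.
have -> : ms k = true by apply/asboolP.
by rewrite /G' /= x1 x2.
Qed.

Theorem mainTheorem5 (F : set_system nat) :
  free_filter F ->
  ((~ meager (char_set F : set Pomega)) <->
     (~ meager (char_set (Fomega F) : set Pomega2))) /\
  (P_filter F <-> P_filter (Fomega F)).
Proof.
move=> hF; split; split.
- by move=> h1 h2; apply: h1; apply: talag.
- by move=> h1 h2; apply: h1; apply: proj_meager.
- exact: PF1.
- exact: PF2.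
Qed.
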